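(* Let $n$ be a positive integer and let $G$ be a bipartite graph having two vertices $x$ and $y$ in the same partite set such that $N(x)$ is a proper subset of $N(y)$. If $G[\overline{K_n}]$ admits a local distance antimagic labeling, then $\chi_{ld}(G[\overline{K_{n}}])\geq 3$.
   Context: All graphs are finite, simple and undirected. $N(v)$ denotes the open neighborhood of $v$. For a graph $G=(V,E)$ of order $N$ without isolated vertices, a bijection $f\colon V\to\{1,2,\dots,N\}$ is a local distance antimagic labeling if $w(u)\neq w(v)$ for every edge $uv$, where $w(u)=\sum_{x\in N(u)}f(x)$. $\chi_{ld}(G)$ is the minimum number of distinct weights over all local distance antimagic labelings of $G$. $\overline{K_n}$ is the edgeless graph on $n$ vertices. The lexicographic product $G[H]$ has vertex set $V(G)\times V(H)$, with $(g,h)$ adjacent to $(g',h')$ iff $gg'\in E(G)$, or $g=g'$ and $hh'\in E(H)$. *)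

(* Defs.v *)
From mathcomp Require Import all_boot.
Set Implicit Arguments. Unset Strict Implicit. Unset Printing Implicit Defensive.

Definition simple_graph (T : finType) (e : rel T) : Prop :=
  symmetric e /\ irreflexive e.

Definition nbhd (T : finType) (e : rel T) (v : T) : {set T} := [set u | e v u].

Definition bipartition (T : finType) (e : rel T) (A : {set T}) : Prop :=
  forall u v, e u v -> (u \in A) != (v \in A).

Definition bipartite (T : finType) (e : rel T) : Prop :=
  exists A : {set T}, bipartition e A.

Definition edgeless (n : nat) : rel 'I_n := fun _ _ => false.
Arguments edgeless n : clear implicits.

Definition lexprod (T U : finType) (eG : rel T) (eH : rel U) : rel (T * U) :=
  fun p q => eG p.1 q.1 || ((p.1 == q.1) && eH p.2 q.2).

Definition no_isolated (T : finType) (e : rel T) : Prop :=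
  forall v : T, exists u : T, e v u.

(* A labeling is a bijection f : V -> 'I_#|V|; the label of v is (f v).+1,
   so labels range over {1, ..., N} with N = #|V|. *)
Definition weight (T : finType) (e : rel T) (f : {ffun T -> 'I_#|T|}) (v : T)
  : nat := \sum_(u in nbhd e v) (f u).+1.

Definition is_ld_labeling (T : finType) (e : rel T) (f : {ffun T -> 'I_#|T|})
  : bool :=
  injectiveb f && [forall u, forall v, e u v ==> (weight e f u != weight e f v)].

(* G admits a local distance antimagic labeling (the notion is defined for
   graphs without isolated vertices). *)
Definition admits_ld_labeling (T : finType) (e : rel T) : Prop :=
  no_isolated e /\ exists f, is_ld_labeling e f.

Definition num_weights (T : finType) (e : rel T) (f : {ffun T -> 'I_#|T|})
  : nat := size (undup [seq weight e f v | v <- enum T]).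

(* chi_ld: minimum number of distinct weights over all local distance
   antimagic labelings (default #|T|.+1 if there is none, irrelevant here). *)
Definition chi_ld (T : finType) (e : rel T) : nat :=
  \big[minn/#|T|.+1]_(f : {ffun T -> 'I_#|T|} | is_ld_labeling e f)
     num_weights e f.

(* Main.v *)
Require Import Defs.
From mathcomp Require Import all_boot.

Lemma sum_proper (U : finType) (A B : {set U}) (F : U -> nat) :
  (forall u, 0 < F u) -> A \proper B -> \sum_(u in A) F u < \sum_(u in B) F u.
Proof.
move=> Fp /properP [sAB [z zB zA]].
rewrite [X in _ < X](big_setID A) /= (setIidPr sAB) -[X in X < _]addn0 ltn_add2l.
have zD : z \in B :\: A by rewrite inE zB zA.
rewrite (bigD1 z zD) /=.
exact: leq_trans (Fp z) (leq_addr _ _).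
Qed.

Theorem mainTheorem8 (T : finType) (e : rel T) (n : nat) (x y : T) :
  0 < n ->
  simple_graph e ->
  (exists A : {set T}, bipartition e A /\ (x \in A) = (y \in A)) ->
  nbhd e x \proper nbhd e y ->
  admits_ld_labeling (lexprod e (edgeless n)) ->
  3 <= chi_ld (lexprod e (edgeless n)).
Proof.
move=> n0 [esym eirr] _ pxy [noiso _].
set E := lexprod e (edgeless n).
have o : 'I_n := Ordinal n0.
have [[u o'] /= Hu] := noiso (x, o).
have exu : e x u by move: Hu; rewrite /E /lexprod /edgeless /= andbF orbF.
have eyu : e y u.
  have := proper_sub pxy => /subsetP /(_ u); rewrite !inE; exact.
have Hxy : nbhd E (x, o) \proper nbhd E (y, o).
  move/properP: pxy => [sxy [z zy zx]].
  apply/properP; split.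
    apply/subsetP=> [[a b]]; rewrite !inE /E /lexprod /edgeless /= !andbF !orbF.
    by move=> h; have := subsetP sxy a; rewrite !inE; apply.
  exists (z, o); rewrite !inE /E /lexprod /edgeless /= !andbF !orbF.
    by move: zy; rewrite inE.
  by move: zx; rewrite inE.
have good : forall f, is_ld_labeling E f -> 3 <= num_weights E f.
  move=> f /andP [_ /forallP Hf].
  have Hw : forall a b, E a b -> weight E f a != weight E f b.
    by move=> a b ab; have /forallP /(_ b) := Hf a; rewrite ab.
  have wxy : weight E f (x, o) < weight E f (y, o).
    by apply: sum_proper.
  have wxu : weight E f (x, o) != weight E f (u, o).
    by apply: Hw; rewrite /E /lexprod /= exu.
  have wyu : weight E f (y, o) != weight E f (u, o).
    by apply: Hw; rewrite /E /lexprod /= eyu.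
  rewrite /num_weights.
  have -> : 3 = size [:: weight E f (x, o); weight E f (y, o); weight E f (u, o)] by [].
  apply: uniq_leq_size.
    rewrite /= !inE negb_or wxu wyu (ltn_eqF wxy) //.
  move=> w; rewrite !inE mem_undup => /or3P [] /eqP ->; apply: map_f; apply: mem_enum.
rewrite /chi_ld; apply: (big_ind (fun k => 3 <= k)).
- rewrite ltnS card_prod card_ord.
  have [z zy zx] : exists2 z, z \in nbhd e y & z \notin nbhd e x.
    by move/properP: pxy => [_ [z ? ?]]; exists z.
  have zy' : z != y.
    by apply/eqP => zy0; move: zy; rewrite inE zy0 (eirr y).
  have hT : 1 < #|T|.
    by rewrite (cardD1 z) (cardD1 y) !inE eq_sym zy'.
  by rewrite (leq_trans hT) // leq_pmulr.
- by move=> a b ha hb; rewrite leq_min ha hb.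
- exact: good.
Qed.
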